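(* If $K$ is a compact Collins–Roscoe space, then $K$ is monotonically Sokolov.
   Context: All spaces are Hausdorff. A family $\mathcal N$ of subsets of a space $T$ is an external network of $A\subset T$ in $T$ if for every $a\in A$ and every open $U\ni a$ there is $N\in\mathcal N$ with $a\in N\subset U$. A space $T$ is a Collins–Roscoe space if to each $x\in T$ one can assign a countable family $\mathcal O(x)$ of subsets of $T$ such that for every $A\subset T$, $\bigcup\{\mathcal O(x): x\in A\}$ is an external network of $\overline{A}$ in $T$. Let $X,Y$ be sets, $\mathcal O$ a family of subsets of $X$ closed under countable increasing unions, $\mathcal N$ a family of subsets of $Y$, and $f:\mathcal O\to\mathcal N$. Then $f$ is $\omega$-monotone if: (a) $f(A)$ is countable for every countable $A\in\mathcal O$; (b) $A\subset B$, $A,B\in\mathcal O$ imply $f(A)\subset f(B)$; (c) if $A_n\in\mathcal O$ and $A_n\subset A_{n+1}$ for all $n\in\omega$ then $f(\bigcup_n A_n)=\bigcup_n f(A_n)$. A space $T$ is monotonically Sokolov if to every countable family $\mathcal F$ of closed subsets of $T$ one can assign a continuous retraction $r_{\mathcal F}:T\to T$ and a countable external network $\mathcal N(\mathcal F)$ of $r_{\mathcal F}(T)$ in $T$ such that $r_{\mathcal F}(F)\subset F$ for every $F\in\mathcal F$ and the assignment $\mathcal F\mapsto\mathcal N(\mathcal F)$ is $\omega$-monotone. *)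

(* Defs.v *)
From HB Require Import structures.
From mathcomp Require Import all_boot all_order.
From mathcomp Require Import all_classical.
From mathcomp Require Import topology.
Set Implicit Arguments. Unset Strict Implicit. Unset Printing Implicit Defensive.
Local Open Scope classical_set_scope.

Definition external_network {T : topologicalType} (N : set (set T)) (A : set T) : Prop :=
  forall a, A a -> forall U : set T, open U -> U a ->
    exists2 N0, N N0 & N0 a /\ N0 `<=` U.

Definition collins_roscoe (T : topologicalType) : Prop :=
  exists O : T -> set (set T),
    (forall x, countable (O x)) /\
    (forall A : set T, external_network (\bigcup_(x in A) O x) (closure A)).

(* omega-monotone map f : Dom -> set Y, Dom a family of subsets of X
   (assumed closed under countable increasing unions). *)
Definition omega_monotone {X Y : Type} (Dom : set (set X)) (f : set X -> set Y) : Prop :=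
  [/\ (forall A, Dom A -> countable A -> countable (f A)),
      (forall A B, Dom A -> Dom B -> A `<=` B -> f A `<=` f B) &
      (forall An : nat -> set X, (forall n, Dom (An n)) ->
         (forall n, An n `<=` An n.+1) ->
         f (\bigcup_n An n) = \bigcup_n f (An n))].

Definition ctbl_closed_families (T : topologicalType) : set (set (set T)) :=
  [set F | countable F /\ (forall C, F C -> closed C)].

Definition retraction {T : topologicalType} (r : T -> T) : Prop :=
  continuous r /\ (forall x, r (r x) = r x).

Definition monotonically_sokolov (T : topologicalType) : Prop :=
  exists (r : set (set T) -> T -> T) (N : set (set T) -> set (set T)),
    (forall F, @ctbl_closed_families T F ->
       [/\ retraction (r F),
           countable (N F),
           external_network (N F) (range (r F)) &
           (forall C, F C -> r F @` C `<=` C)]) /\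
    omega_monotone (@ctbl_closed_families T) N.

(* Main.v *)
Require Import Defs.
From HB Require Import structures.
From mathcomp Require Import all_boot all_order all_algebra.
From mathcomp Require Import all_classical all_reals.
From mathcomp Require Import topology normedtype.
From mathcomp Require Import Rstruct finmap ring lra.
Import Order.TTheory GRing.Theory Num.Theory.
Import numFieldNormedType.Exports.
Local Open Scope classical_set_scope.
Local Open Scope ring_scope.
Set Implicit Arguments. Unset Strict Implicit. Unset Printing Implicit Defensive.

Section Construction.
Context (K : topologicalType) (R : realType) (O : K -> set (set K)).

Definition Nw (S : set K) : set (set K) := \bigcup_(d in S) O d.
Definition uf (N1 N2 : set K) : K -> R := Urysohn (closure N1) (closure N2).
Definition Phi (S : set K) : set (K -> R) :=
  (fun p => uf p.1 p.2) @` (Nw S `*` Nw S).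
Definition Gs (f : K -> R) (j : int) (k : nat) : set K :=
  [set z | `|f z * k.+1%:R - j%:~R| < 1].
Definition cond (S : set K) : set (set K) :=
  (fun p => Gs p.1 p.2.1 p.2.2) @` (Phi S `*` [set: int * nat]).
Definition wit (P : {fset (set K)}) (C : set K) : set K :=
  match pselect (exists z, C z /\ forall G, G \in P -> G z) with
  | left h => [set sval (cid h)] | right _ => set0 end.
Definition step (F : set (set K)) (S : set K) : set K :=
  S `|` \bigcup_(P in [set P : {fset (set K)} | {subset P <= cond S}])
          \bigcup_(C in F `|` [set setT]) wit P C.
Definition Dn F n := iter n (step F) set0.
Definition DD F := \bigcup_n Dn F n.
Definition NN F := Nw (DD F).
Lemma Nw_mono S S' : S `<=` S' -> Nw S `<=` Nw S'.
Proof. by move=> SS' N [d Sd Od]; exists d => //; apply: SS'. Qed.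

Lemma Phi_mono S S' : S `<=` S' -> Phi S `<=` Phi S'.
Proof.
by move=> SS' f [[N1 N2] [/= h1 h2] <-]; exists (N1, N2) => //; split; apply: Nw_mono SS' _ _.
Qed.

Lemma cond_mono S S' : S `<=` S' -> cond S `<=` cond S'.
Proof.
by move=> SS' G [[f jk] [/= hf _] <-]; exists (f, jk) => //; split => //; apply: Phi_mono SS' _ _.
Qed.

Lemma witP P C z : wit P C z -> C z /\ forall G, G \in P -> G z.
Proof.
rewrite /wit; case: pselect => [h|//] /= ->.
exact: (svalP (cid h)).
Qed.

Lemma witE P C : (exists z, C z /\ forall G, G \in P -> G z) -> exists z, wit P C z.
Proof.
move=> h; rewrite /wit; case: pselect => [h'|//].
by exists (sval (cid h')).
Qed.

Lemma step_mono F F' S S' : F `<=` F' -> S `<=` S' -> step F S `<=` step F' S'.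
Proof.
move=> FF' SS' z [Sz|[P /= PS [C CF wz]]]; [left; exact: SS'|right].
exists P; first by move=> G /PS; rewrite !in_setE; apply: cond_mono.
by exists C => //; case: CF => [/FF'|]; [left|right].
Qed.

Lemma step_ext F S : S `<=` step F S.
Proof. by move=> z Sz; left. Qed.

Lemma Dn_monoF F F' n : F `<=` F' -> Dn F n `<=` Dn F' n.
Proof.
move=> FF'; elim: n => [//|n IH] /=.
exact: step_mono.
Qed.

Lemma Dn_monon F n m : (n <= m)%N -> Dn F n `<=` Dn F m.
Proof.
elim: m => [|m IH]; first by rewrite leqn0 => /eqP ->.
rewrite leq_eqVlt => /orP [/eqP ->//|/IH h].
by apply: subset_trans h _; apply: step_ext.
Qed.

Lemma seq_incr (T : eqType) (A : nat -> set T) (s : seq T) :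
  (forall n m, (n <= m)%N -> A n `<=` A m) ->
  (forall x, x \in s -> exists n, A n x) -> exists m, forall x, x \in s -> A m x.
Proof.
move=> Amono; elim: s => [|a s IH] h; first by exists 0%N.
have [n An] := h a (mem_head _ _).
have [m Am] : exists m, forall x, x \in s -> A m x.
  by apply: IH => x xs; apply: h; rewrite in_cons xs orbT.
exists (maxn n m) => x; rewrite in_cons => /orP [/eqP ->|xs].
  by apply: Amono An; apply: leq_maxl.
by apply: Amono (Am x xs); apply: leq_maxr.
Qed.

Lemma fset_incr (T : choiceType) (A : nat -> set T) (P : {fset T}) :
  (forall n m, (n <= m)%N -> A n `<=` A m) ->
  (forall x, x \in P -> exists n, A n x) -> exists m, forall x, x \in P -> A m x.
Proof. by move=> Am h; apply: (@seq_incr _ A (enum_fset P)). Qed.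

Lemma cond_bigcup (X : nat -> set K) G :
  (forall n m, (n <= m)%N -> X n `<=` X m) ->
  cond (\bigcup_n X n) G -> exists m, cond (X m) G.
Proof.
move=> Xm [[f jk] [/= [[N1 N2] [/= [d1 [n1 _ X1] O1] [d2 [n2 _ X2] O2]] <-] _] <-].
exists (maxn n1 n2); exists (uf N1 N2, jk) => //; split => //=.
exists (N1, N2) => //; split => /=.
  by exists d1 => //; apply: Xm X1; apply: leq_maxl.
by exists d2 => //; apply: Xm X2; apply: leq_maxr.
Qed.

Lemma fset_cond_bigcup (X : nat -> set K) (P : {fset (set K)}) :
  (forall n m, (n <= m)%N -> X n `<=` X m) ->
  {subset P <= cond (\bigcup_n X n)} -> exists m, {subset P <= cond (X m)}.
Proof.
move=> Xm PS.
have [m Hm] := @fset_incr _ (fun n => cond (X n)) P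
  (fun n m h => cond_mono (Xm n m h))
  (fun G GP => cond_bigcup Xm (set_mem (PS G GP))).
by exists m => G GP; rewrite in_setE; apply: Hm.
Qed.

Lemma countableU (T : Type) (A B : set T) : countable A -> countable B -> countable (A `|` B).
Proof.
move=> cA cB.
have h : countable (\bigcup_(b in [set: bool]) (if b then A else B)).
  by apply: bigcup_countable => // -[].
apply: sub_countable h; apply: subset_card_le => z [Az|Bz].
  by exists true.
by exists false.
Qed.

Lemma countable_img (T U : Type) (f : T -> U) (A : set T) : countable A -> countable (f @` A).
Proof. by move=> cA; apply: sub_countable cA; apply: card_image_le. Qed.

Lemma Dn_union (Fk : nat -> set (set K)) n :
  (forall k, Fk k `<=` Fk k.+1) ->
  Dn (\bigcup_k Fk k) n `<=` \bigcup_k Dn (Fk k) n.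
Proof.
move=> Fi.
have Fm : forall a b, (a <= b)%N -> Fk a `<=` Fk b.
  move=> a b; elim: b => [|b IH]; first by rewrite leqn0 => /eqP ->.
  rewrite leq_eqVlt => /orP [/eqP ->//|/IH h].
  exact: subset_trans h (Fi b).
elim: n => [//|n IH] z /= [Sz|[P /= PS [C CF wz]]].
  have [k _ hk] := IH z Sz.
  by exists k => //; apply: step_ext.
have PS' : {subset P <= cond (\bigcup_k Dn (Fk k) n)}.
  by move=> G /PS; rewrite !in_setE; apply: cond_mono.
have [m Hm] := fset_cond_bigcup (fun a b h => Dn_monoF (Fm a b h)) PS'.
case: CF => [[j _ Cj]|CT].
  exists (maxn m j) => //; right; exists P.
    move=> G /Hm; rewrite !in_setE; apply: cond_mono.
    by apply: Dn_monoF; apply: Fm; apply: leq_maxl.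
  exists C => //; left; apply: Fm Cj; apply: leq_maxr.
exists m => //; right; exists P; first by move=> G /Hm.
by exists C => //; right.
Qed.

Section Count.
Hypothesis cO : forall x, countable (O x).

Lemma Nw_countable S : countable S -> countable (Nw S).
Proof. by move=> cS; apply: bigcup_countable. Qed.

Lemma cond_countable S : countable S -> countable (cond S).
Proof.
move=> cS; apply: countable_img; apply: countableX => //.
by apply: countable_img; apply: countableX; apply: Nw_countable.
Qed.

Lemma wit_countable P C : countable (wit P C).
Proof. by rewrite /wit; case: pselect => _ //; apply: countable1. Qed.

Lemma step_countable F S : countable F -> countable S -> countable (step F S).
Proof.
move=> cF cS; apply: countableU => //.
apply: bigcup_countable => [|P _].
  exact: fset_subset_countable (cond_countable cS).
apply: bigcup_countable => [|C _]; last exact: wit_countable.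
by apply: countableU => //; apply: countable1.
Qed.

Lemma Dn_countable F n : countable F -> countable (Dn F n).
Proof. by move=> cF; elim: n => [|n IH] //=; apply: step_countable. Qed.

Lemma NN_omega : omega_monotone (@ctbl_closed_families K) NN.
Proof.
split.
- move=> F _ cF; apply: Nw_countable; apply: bigcup_countable => // n _.
  exact: Dn_countable.
- move=> F F' _ _ FF'; apply: Nw_mono => z [n _ hz]; exists n => //.
  exact: Dn_monoF FF' _ hz.
- move=> An _ Ai; apply/seteqP; split.
    move=> N [d [n _ hd] Od].
    have [k _ hk] := Dn_union Ai hd.
    by exists k => //; exists d => //; exists n.
  move=> N [k _]; apply: Nw_mono => z [n _ hz]; exists n => //.
  by apply: Dn_monoF hz => G AG; exists k.
Qed.
End Count.

Definition ptK (x : K) : Type := K.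
End Construction.
HB.instance Definition _ (K : topologicalType) (x : K) := Topological.copy (ptK x) K.
HB.instance Definition _ (K : topologicalType) (x : K) := isPointed.Build (ptK x) x.

Section Topo.
Context (K : topologicalType) (R : realType).

Lemma open_dist (f : K -> R) (c e : R) : continuous f ->
  open [set z | `|f z - c| < e].
Proof.
move=> cf; rewrite openE => z /= hz.
have dpos : 0 < e - `|f z - c| by rewrite subr_gt0.
have h := cvgr_dist_lt _ _ (cf z) _ dpos (FF := nbhs_filter z).
apply: filterS h => w /= hw.
rewrite (le_lt_trans (ler_distD (f z) _ _))// -ltrBrDr.
by rewrite distrC.
Qed.

Lemma near_dist (f : K -> R) (x : K) (e : R) : continuous f -> 0 < e ->
  nbhs x [set w | `|f w - f x| < e].
Proof.
move=> cf ep; have h := cvgr_dist_lt _ _ (cf x) _ ep (FF := nbhs_filter x).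
apply: filterS h => w /= hw.
by rewrite distrC.
Qed.

Lemma sep_cover (x : K) (Y : set K) (Ph : set (K -> R)) :
  compact Y -> (forall f, Ph f -> continuous f) ->
  (forall y, Y y -> exists f, Ph f /\ f y != f x) ->
  exists (D' : {fset K}) (g : K -> K -> R) (e : K -> R),
    (forall y, y \in D' -> Ph (g y) /\ 0 < e y) /\
    (forall z, Y z -> exists2 y, y \in D' & e y < `|g y z - g y x|).
Proof.
move=> cY cPh hY.
pose g y := match pselect (exists f, Ph f /\ f y != f x) with
  left h => sval (cid h) | right _ => fun _ => 0 end.
have gP y : Y y -> Ph (g y) /\ g y y != g y x.
  move=> Yy; rewrite /g; case: pselect => [h|/(_ (hY y Yy))//].
  exact: (svalP (cid h)).
pose e y := `|g y y - g y x| / 2.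
have eP y : Y y -> 0 < e y.
  move=> /gP [_ ne]; rewrite /e divr_gt0 // normr_gt0 subr_eq0 //.
have cov : cover_compact (T := ptK x) Y.
  by have <- := @compact_cover (ptK x).
have [||D' D'Y covD] := cov K Y (fun y => [set z | `|g y z - g y y| < e y]).
- move=> y Yy; apply: (@open_dist (g y)); exact: cPh (gP y Yy).1.
- move=> z Yz; exists z => //=; by rewrite subrr normr0 eP.
exists D', g, e; split.
  by move=> y /D'Y; rewrite in_setE => Yy; split; [exact: (gP y Yy).1|exact: eP].
move=> z /covD [y /= yD hz]; exists y => //.
have h1 : `|g y y - g y x| <= `|g y y - g y z| + `|g y z - g y x| by apply: ler_distD.
have h2 : `|g y y - g y x| = e y * 2 by rewrite /e mulfVK // pnatr_eq0.
rewrite distrC in hz.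
lra.
Qed.

End Topo.

Section Main.
Context (K : topologicalType) (R : realType) (O : K -> set (set K)).
Hypotheses (hK : hausdorff_space K) (cK : compact [set: K])
  (cO : forall x, countable (O x))
  (crO : forall A : set K, external_network (Nw O A) (closure A)).

Lemma regK (a : K) (A : set K) : nbhs a A -> exists2 B, nbhs a B & closure B `<=` A.
Proof.
move=> hA; have := @compact_regular K a setT hK cK (@filterT _ _ (nbhs_filter a)).
by move=> /(_ A hA) [B Ba BA]; exists B.
Qed.

Lemma net_small (S : set K) (y : K) (B : set K) : closure S y -> nbhs y B ->
  exists2 N, Nw O S N & N y /\ N `<=` B.
Proof.
move=> hy hB; have [N NN [Ny NB]] := crO hy (@open_interior K B) hB.
by exists N => //; split => //; apply: subset_trans NB (@interior_subset K B).
Qed.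

Lemma sepK S y y' : closure S y -> closure S y' -> y != y' ->
  exists f, @Phi K R O S f /\ f y != f y'.
Proof.
move=> hy hy' nyy'.
have c1 : closed [set y'] by apply: accessible_closed_set1; apply: hausdorff_accessible.
have nb1 : nbhs y (~` [set y']).
  apply: open_nbhs_nbhs; split; first exact: closed_openC.
  by move=> /= e; rewrite e eqxx in nyy'.
have [B1 hB1 cB1] := regK nb1.
have [N1 NwN1 [N1y N1B1]] := net_small hy hB1.
have nb2 : nbhs y' (~` closure N1).
  apply: open_nbhs_nbhs; split; first exact/closed_openC/closed_closure.
  by move=> /(closureS N1B1) /cB1 /=; apply.
have [B2 hB2 cB2] := regK nb2.
have [N2 NwN2 [N2y N2B2]] := net_small hy' hB2.
exists (uf R N1 N2); split; first by exists (N1, N2).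
have sep : uniform_separator (closure N1) (closure N2).
  apply: normal_uniform_separator; first exact: compact_normal.
  - exact: closed_closure.
  - exact: closed_closure.
  apply/seteqP; split => // z [z1 z2].
  by have := cB2 z (closureS N2B2 z2).
have h0 : uf R N1 N2 y = 0.
  by apply: (Urysohn_sub0 sep); exists y => //; apply: subset_closure.
have h1 : uf R N1 N2 y' = 1.
  by apply: (Urysohn_sub1 sep); exists y' => //; apply: subset_closure.
by rewrite h0 h1 eq_sym oner_eq0.
Qed.


Lemma Phi_cont S f : @Phi K R O S f -> continuous f.
Proof. by move=> [[N1 N2] _ <-]; apply: Urysohn_continuous. Qed.

Lemma K1 F (P : {fset (set K)}) C z : {subset P <= cond R O (DD R O F)} ->
  (F `|` [set setT]) C -> C z -> (forall G, G \in P -> G z) ->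
  exists d, [/\ DD R O F d, C d & forall G, G \in P -> G d].
Proof.
move=> PS CF Cz Pz.
have [m Hm] := fset_cond_bigcup (fun a b h => @Dn_monon K R O F a b h) PS.
have [w ww] := witE (ex_intro _ z (conj Cz Pz)).
have [Cw Pw] := witP ww.
exists w; split => //; exists m.+1 => //=; right.
by exists P => //; exists C.
Qed.

Lemma K3 F C x : closed C -> (F `|` [set setT]) C -> C x ->
  exists y, closure (DD R O F `&` C) y /\
    forall f, @Phi K R O (DD R O F) f -> f y = f x.
Proof.
move=> clC CF Cx; set S := DD R O F.
apply: contrapT => hno.
have hY : forall y, closure (S `&` C) y -> exists f, @Phi K R O S f /\ f y != f x.
  move=> y hy; apply: contrapT => hf; apply: hno; exists y; split => //.
  move=> f Pf; apply: contrapT => nf; apply: hf; exists f; split => //.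
  by apply/eqP.
have cY : compact (closure (S `&` C)).
  by apply: (subclosed_compact _ cK) => //; exact: closed_closure.
have [D' [g [e [hD' hcov]]]] := sep_cover cY (@Phi_cont S) hY.
pose k y := Num.trunc (2 / e y).
pose j y := Num.floor (g y x * (k y).+1%:R).
pose P := [fset Gs (g y) (j y) (k y) | y in D']%fset.
have PS : {subset P <= cond R O S}.
  move=> G /imfsetP [y /= yD ->]; rewrite in_setE.
  by exists (g y, (j y, k y)) => //; split => //; exact: (hD' y yD).1.
have Px : forall G, G \in P -> G x.
  move=> G /imfsetP [y /= yD ->]; rewrite /Gs /=.
  have /andP [h1 h2] := floor_itv (g y x * (k y).+1%:R).
  rewrite intrD in h2; rewrite ger0_norm; last by rewrite subr_ge0.
  rewrite /j; lra.
have [d [Sd Cd Pd]] := K1 PS CF Cx Px.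
have [y yD ey] := hcov d (subset_closure (conj Sd Cd)).
have [gP ep] := hD' y yD.
have Gd : Gs (g y) (j y) (k y) d by apply: Pd; apply/imfsetP; exists y.
have Gx : Gs (g y) (j y) (k y) x by apply: Px; apply/imfsetP; exists y.
rewrite /Gs /= in Gd Gx.
set q : R := (k y).+1%:R in Gd Gx.
have qpos : 0 < q by rewrite /q ltr0n.
have hq : 2 / e y < q by rewrite /q /k truncnS_gt.
have hq2 : 2 < q * e y by rewrite -ltr_pdivrMr.
have hn : `|g y d - g y x| * q < 2.
  rewrite -[q]ger0_norm ?ltW // -normrM mulrBl.
  have -> : g y d * q - g y x * q = (g y d * q - (j y)%:~R) - (g y x * q - (j y)%:~R) by ring.
  apply: (le_lt_trans (ler_normB _ _)); lra.
nra.
Qed.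

Definition rr F (x : K) : K :=
  match pselect (exists y, closure (DD R O F) y /\
                   forall f, @Phi K R O (DD R O F) f -> f y = f x) with
  | left h => sval (cid h) | right _ => x end.

Lemma rrP F x : closure (DD R O F) (rr F x) /\
  forall f, @Phi K R O (DD R O F) f -> f (rr F x) = f x.
Proof.
rewrite /rr; case: pselect => [h|hn]; first exact: (svalP (cid h)).
exfalso; apply: hn.
have [y [hy hf]] := @K3 F setT x closedT (or_intror erefl) I.
by exists y; rewrite setIT in hy.
Qed.

Lemma rr_uniq F y y' : closure (DD R O F) y -> closure (DD R O F) y' ->
  (forall f, @Phi K R O (DD R O F) f -> f y = f y') -> y = y'.
Proof.
move=> hy hy' hf; apply/eqP; apply: contrapT => /negP ne.
have [f [Pf nf]] := sepK hy hy' ne.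
by rewrite (hf f Pf) eqxx in nf.
Qed.

Lemma rr_idem F x : rr F (rr F x) = rr F x.
Proof.
have [h1 h2] := rrP F x; have [h3 h4] := rrP F (rr F x).
by apply: (@rr_uniq F) => // f Pf; exact: h4.
Qed.

Lemma rr_sub F C : F C -> closed C -> rr F @` C `<=` C.
Proof.
move=> FC clC _ [x Cx <-].
have [y [hy hf]] := K3 clC (or_introl FC) Cx.
have [h1 h2] := rrP F x.
have yS : closure (DD R O F) y by apply: closureS hy => z [].
have -> : rr F x = y by apply: (@rr_uniq F) => // f Pf; rewrite h2 ?hf.
by rewrite (closure_id C).1 //; apply: closureS hy => z [].
Qed.


Lemma rr_cont F : continuous (rr F).
Proof.
move=> x V hV; set S := DD R O F.
have Ux : V° (rr F x) := hV.
have clY : closed (closure S `&` ~` V°).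
  apply: closedI; first exact: closed_closure.
  exact/open_closedC/open_interior.
have cY : compact (closure S `&` ~` V°) by apply: (subclosed_compact clY cK).
have [h1 h2] := rrP F x.
have hY : forall y, (closure S `&` ~` V°) y -> exists f, @Phi K R O S f /\ f y != f x.
  move=> y [hy nU].
  have ne : y != rr F x by apply/eqP => e; apply: nU; rewrite e.
  have [f [Pf nf]] := sepK hy h1 ne.
  by exists f; split => //; rewrite -(h2 f Pf).
have [D' [g [e [hD' hcov]]]] := sep_cover cY (@Phi_cont S) hY.
have nW : nbhs x (\bigcap_(y in [set` D']) [set w | `|g y w - g y x| < e y]).
  apply: filter_bigI => y yD.
  exact: (near_dist x (Phi_cont (hD' y yD).1) (hD' y yD).2).
apply: filterS nW => w hw /=.
apply: interior_subset; apply: contrapT => nU.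
have [hw1 hw2] := rrP F w.
have [y yD ey] := hcov (rr F w) (conj hw1 nU).
rewrite (hw2 _ (hD' y yD).1) in ey.
have h : `|g y w - g y x| < e y by exact: (hw y yD).
lra.
Qed.

End Main.

Lemma ext_net_sub (T : topologicalType) (N : set (set T)) (A B : set T) :
  external_network N A -> B `<=` A -> external_network N B.
Proof. by move=> hN BA a /BA; apply: hN. Qed.

Theorem corollary1p2 (K : topologicalType) :
  hausdorff_space K -> compact [set: K] -> collins_roscoe K ->
  monotonically_sokolov K.
Proof.
move=> hK cK [O [cO crO]].
exists (@rr K Rdefinitions.R O), (NN Rdefinitions.R O); split; last exact: NN_omega.
move=> F [cF clF]; split.
- split; first exact: rr_cont.
  exact: rr_idem.
- by have [h _ _] := NN_omega Rdefinitions.R cO; apply: h.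
- apply: ext_net_sub (crO (DD Rdefinitions.R O F)) _.
  by move=> _ [x _ <-]; have [] := @rrP K Rdefinitions.R O cK F x.
- by move=> C FC; apply: rr_sub => //; apply: clF.
Qed.
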